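(* Let $n\ge1$ and $d\ge0$. The map $\phi\colon\mathsf{PB}_{n,d}\to\mathsf{C}_{n,d}$ is a bijection.
   Context: A composition is a finite sequence of positive integers $\beta=(\beta_1,\dots,\beta_k)$, with length $\bm{l}(\beta)=k$ and size $|\beta|=\sum\beta_i$ (the empty composition is allowed). A partition is a weakly decreasing composition $\lambda=(\lambda_1\ge\lambda_2\ge\cdots)$. A composition $\alpha$ is inverting if for each integer $i$ with $1<i\le\max_j\alpha_j$ there exist indices $s<t$ with $\alpha_s=i$ and $\alpha_t=i-1$. Every composition factors uniquely as $\alpha=\gamma\,k^{i_k}\cdots2^{i_2}1^{i_1}$ (concatenation, $i_j\ge1$) with $\gamma$ a composition containing none of the values $1,\dots,k$ and $k\ge0$ maximal; $\alpha$ is pure if this $k$ is even. $\mathsf{B}_n$ is the set of pure and inverting compositions of length at most $n$. $\mathsf{C}_{n,d}$ is the set of compositions of $d$ with at most $n$ parts, and $\mathsf{PB}_{n,d}=\{(\lambda,\beta):\lambda$ a partition, $\beta\in\mathsf{B}_n$, $|\lambda|+|\beta|=d$, $\bm{l}(\lambda)\le n$, $\bm{l}(\beta)\le n\}$. For $(\lambda,\beta)\in\mathsf{PB}_{n,d}$, $\phi(\lambda,\beta)$ is defined as follows: if $\bm{l}(\lambda)>\bm{l}(\beta)$, first append $\bm{l}(\lambda)-\bm{l}(\beta)$ zeros after the last part of $\beta$. Then, for each $1\le i\le\bm{l}(\lambda)$, add $\lambda_i$ to the $i$-th largest part of (the padded) $\beta$, where parts are compared by value and, when $\beta_j=\beta_k$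 with $j<k$, the part $\beta_j$ is considered smaller than $\beta_k$. The resulting composition is $\phi(\lambda,\beta)$. *)

(* Defs.v *)
From mathcomp Require Import all_boot.
Set Implicit Arguments. Unset Strict Implicit. Unset Printing Implicit Defensive.

Definition is_composition (a : seq nat) : bool := all (fun x => 0 < x) a.

Definition is_partition (l : seq nat) : bool :=
  is_composition l && sorted geq l.

Definition inverting (a : seq nat) : Prop :=
  forall i, 1 < i -> i <= \max_(x <- a) x ->
    exists s t, [/\ s < t, t < size a, nth 0 a s = i & nth 0 a t = i.-1].

(* alpha factors as gamma k^{e_1} (k-1)^{e_2} ... 1^{e_k}, all e_j >= 1,
   with gamma containing none of the values 1..k. *)
Definition factors_with (a : seq nat) (k : nat) : Prop :=
  exists (g e : seq nat),
    [/\ is_composition g, all (fun x => k < x) g,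
        size e = k, all (fun x => 0 < x) e &
        a = g ++ flatten [seq nseq (nth 0 e j) (k - j) | j <- iota 0 k]].

Definition pure (a : seq nat) : Prop :=
  exists k, [/\ factors_with a k, (forall k', factors_with a k' -> k' <= k)
              & ~~ odd k].

Definition in_B (n : nat) (b : seq nat) : Prop :=
  [/\ is_composition b, pure b, inverting b & size b <= n].

Definition in_C (n d : nat) (c : seq nat) : Prop :=
  [/\ is_composition c, sumn c = d & size c <= n].

Definition in_PB (n d : nat) (p : seq nat * seq nat) : Prop :=
  [/\ is_partition p.1, in_B n p.2, sumn p.1 + sumn p.2 = d,
      size p.1 <= n & size p.2 <= n].

Definition pad_beta (l b : seq nat) : seq nat :=
  b ++ nseq (size l - size b) 0.

(* 0-based rank of position j in b: number of positions k that are larger,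
   where k is larger than j iff b_k > b_j, or b_k = b_j and k > j. *)
Definition rank_in (b : seq nat) (j : nat) : nat :=
  count (fun k => (nth 0 b j < nth 0 b k) ||
                  ((nth 0 b k == nth 0 b j) && (j < k)))
        (iota 0 (size b)).

(* phi(lambda, beta): add lambda_i to the i-th largest part of padded beta *)
Definition phi (p : seq nat * seq nat) : seq nat :=
  let b := pad_beta p.1 p.2 in
  [seq nth 0 b j + nth 0 p.1 (rank_in b j) | j <- iota 0 (size b)].

(* Main.v *)
Require Import Defs.
From mathcomp Require Import all_boot zify.
From Stdlib Require Import Classical.
Set Implicit Arguments. Unset Strict Implicit. Unset Printing Implicit Defensive.

Definition lt_at (b : seq nat) j k :=
  (nth 0 b j < nth 0 b k) || ((nth 0 b k == nth 0 b j) && (j < k)).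

Lemma rank_inE b j : rank_in b j = count (lt_at b j) (iota 0 (size b)).
Proof. by []. Qed.

Lemma lt_at_irr b j : lt_at b j j = false.
Proof. rewrite /lt_at; lia. Qed.
Lemma lt_at_trans b j k l : lt_at b j k -> lt_at b k l -> lt_at b j l.
Proof. rewrite /lt_at; lia. Qed.
Lemma lt_at_asym b j k : lt_at b j k -> lt_at b k j = false.
Proof. rewrite /lt_at; lia. Qed.
Lemma lt_at_total b j k : j != k -> lt_at b j k || lt_at b k j.
Proof. rewrite /lt_at; lia. Qed.

Definition same_order (b c : seq nat) :=
  size b = size c /\
  forall j k, j < size b -> k < size b -> lt_at b j k = lt_at c j k.

Lemma same_order_sym b c : same_order b c -> same_order c b.
Proof. by case=> e H; split=> // j k; rewrite -e => hj hk; rewrite H. Qed.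
Lemma same_order_trans b c e : same_order b c -> same_order c e -> same_order b e.
Proof.
case=> e1 H1 [e2 H2]; split; first by rewrite e1.
by move=> j k hj hk; rewrite H1 // H2 // -e1.
Qed.

Lemma order_from_mono b c : size b = size c ->
  (forall j k, j < size b -> k < size b -> lt_at b j k -> lt_at c j k) ->
  same_order b c.
Proof.
move=> e H; split=> // j k hj hk.
case hb: (lt_at b j k); first by rewrite H.
case: (eqVneq j k) => [-> | njk]; first by rewrite lt_at_irr.
move: (lt_at_total b njk); rewrite hb /= => hkj.
by rewrite lt_at_asym // H.
Qed.

Lemma same_order_rank b c j : j < size b -> same_order b c -> rank_in b j = rank_in c j.
Proof.
move=> hj [e H]; rewrite !rank_inE -e; apply: eq_in_count => k.
by rewrite mem_iota add0n => hk; apply: H.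
Qed.

Lemma count_lt_strict (T : eqType) (a1 a2 : pred T) (s : seq T) x :
  subpred a1 a2 -> x \in s -> a2 x -> ~~ a1 x -> count a1 s < count a2 s.
Proof.
move=> sub; elim: s => //= y s IH; rewrite inE => /orP [/eqP <- | xs] h2 h1.
  rewrite h2 (negbTE h1) /= add0n add1n ltnS; exact: sub_count.
have := IH xs h2 h1; case h: (a1 y); first by rewrite (sub _ h).
by rewrite add0n => /leq_trans; apply; apply: leq_addl.
Qed.

Lemma rank_lt b j k : j < size b -> k < size b -> lt_at b j k ->
  rank_in b k < rank_in b j.
Proof.
move=> hj hk hjk; rewrite !rank_inE.
apply: (@count_lt_strict _ _ _ _ k).
- by move=> l hkl; apply: lt_at_trans hjk hkl.
- by rewrite mem_iota.
- done.
- by rewrite lt_at_irr.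
Qed.

Lemma rank_bound b j : j < size b -> rank_in b j < size b.
Proof.
move=> hj; rewrite rank_inE.
apply: (@leq_trans (count predT (iota 0 (size b)))); last by rewrite count_predT size_iota.
apply: (@count_lt_strict _ _ _ _ j) => //; first by rewrite mem_iota.
by rewrite lt_at_irr.
Qed.

Lemma rank_inj b j k : j < size b -> k < size b -> rank_in b j = rank_in b k -> j = k.
Proof.
move=> hj hk e; apply/eqP; apply: contraT => njk.
case/orP: (lt_at_total b njk) => h.
  by have := rank_lt hj hk h; rewrite e ltnn.
by have := rank_lt hk hj h; rewrite e ltnn.
Qed.

Lemma rank_perm b : perm_eq (map (rank_in b) (iota 0 (size b))) (iota 0 (size b)).
Proof.
have U : uniq (map (rank_in b) (iota 0 (size b))).
  rewrite map_inj_in_uniq ?iota_uniq // => j k.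
  rewrite !mem_iota !add0n; exact: rank_inj.
have S : {subset map (rank_in b) (iota 0 (size b)) <= iota 0 (size b)}.
  move=> r /mapP [j]; rewrite !mem_iota !add0n => hj ->; exact: rank_bound.
have Sz : size (iota 0 (size b)) <= size (map (rank_in b) (iota 0 (size b))) by rewrite size_map.
have [_ E] := uniq_min_size U S Sz.
by apply: uniq_perm => //; exact: iota_uniq.
Qed.

Lemma rank_surj b r : r < size b -> exists2 j, j < size b & rank_in b j = r.
Proof.
move=> hr; have : r \in map (rank_in b) (iota 0 (size b)).
  by rewrite (perm_mem (rank_perm b)) mem_iota.
by case/mapP => j; rewrite mem_iota add0n => hj ->; exists j.
Qed.

Lemma nth_noninc l i j : sorted geq l -> i <= j -> nth 0 l j <= nth 0 l i.
Proof.
move=> so hij; case: (ltnP j (size l)) => hj; last by rewrite nth_default.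
have hi : i < size l by apply: leq_ltn_trans hj.
have := sorted_leq_nth (leT := geq) _ _ 0 so; apply => //.
- by move=> a b c h1 h2; apply: leq_trans h2 h1.
- by move=> a; exact: leqnn.
Qed.

Lemma size_pad l b : size (pad_beta l b) = maxn (size l) (size b).
Proof. rewrite /pad_beta size_cat size_nseq; lia. Qed.

Lemma size_phi p : size (phi p) = size (pad_beta p.1 p.2).
Proof. by rewrite /phi size_map size_iota. Qed.

Lemma nth_phi p j : j < size (pad_beta p.1 p.2) ->
  nth 0 (phi p) j = nth 0 (pad_beta p.1 p.2) j + nth 0 p.1 (rank_in (pad_beta p.1 p.2) j).
Proof. by move=> hj; rewrite /phi (nth_map 0) ?size_iota // nth_iota. Qed.

Lemma phi_order p : sorted geq p.1 -> same_order (pad_beta p.1 p.2) (phi p).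
Proof.
move=> so; set b := pad_beta p.1 p.2.
apply: order_from_mono; first by rewrite size_phi.
move=> j k hj hk hjk; have hr := rank_lt hj hk hjk.
have := nth_noninc so (ltnW hr); rewrite /lt_at !nth_phi //.
move: hjk; rewrite /lt_at -/b; lia.
Qed.

Lemma sum_nth_iota s m : size s <= m -> \sum_(r <- iota 0 m) nth 0 s r = sumn s.
Proof.
move=> h; rewrite -(subnKC h) iotaD big_cat /= add0n.
rewrite [X in _ + X]big1_seq ?addn0; last first.
  by move=> i /andP [_]; rewrite mem_iota => /andP [hi _]; rewrite nth_default.
by rewrite sumnE -{3}(mkseq_nth 0 s) /mkseq big_map.
Qed.

Lemma sum_phi p : sumn (phi p) = sumn p.1 + sumn p.2.
Proof.
set b := pad_beta p.1 p.2.
have -> : phi p = [seq nth 0 b j + nth 0 p.1 (rank_in b j) | j <- iota 0 (size b)] by [].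
rewrite sumnE big_map big_split /=.
have -> : \sum_(j <- iota 0 (size b)) nth 0 b j = sumn p.2.
  rewrite -(big_map (nth 0 b) predT (fun j => j)).
  have -> : [seq nth 0 b i | i <- iota 0 (size b)] = b by rewrite -{3}(mkseq_nth 0 b).
  rewrite -sumnE.
  by rewrite /b /pad_beta sumn_cat sumn_nseq mul0n addn0.
rewrite -(big_map (rank_in b) predT (fun r => nth 0 p.1 r)).
rewrite (perm_big _ (rank_perm b)).
have H : size p.1 <= size b by rewrite /b size_pad; exact: leq_maxl.
have := sum_nth_iota H; rewrite /= => ->.
by rewrite addnC.
Qed.

Lemma max_geP i s : 0 < i -> (i <= \max_(x <- s) x) = has (fun x => i <= x) s.
Proof.
move=> hi; elim: s => [|y s IH]; first by rewrite big_nil /=; lia.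
by rewrite big_cons leq_max IH.
Qed.

Lemma so_lt b x a c : same_order b x -> a < size b -> c < size b ->
  lt_at b a c -> lt_at x a c.
Proof. by case=> _ H ha hc; rewrite H. Qed.

Lemma nth_padl (s : seq nat) e j : j < size s -> nth 0 (s ++ nseq e 0) j = nth 0 s j.
Proof. by move=> h; rewrite nth_cat h. Qed.
Lemma nth_padr (s : seq nat) e j : size s <= j -> nth 0 (s ++ nseq e 0) j = 0.
Proof. by move=> h; rewrite nth_cat ltnNge h /= nth_nseq; case: ifP. Qed.

Lemma minimal_le be e x : is_composition be -> inverting be ->
  same_order (be ++ nseq e 0) x -> (0 < e \/ all (fun y => 0 < y) x) ->
  forall j, nth 0 (be ++ nseq e 0) j <= nth 0 x j.
Proof.
move=> cb ib so hpos.
have szb : size (be ++ nseq e 0) = size be + e by rewrite size_cat size_nseq.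
have key : forall v j, j < size be -> nth 0 be j = v.+1 -> v.+1 <= nth 0 x j.
  elim=> [|v IH] j hj hv.
    case: hpos => [he | /allP ax].
      have hz : size be < size (be ++ nseq e 0) by rewrite szb; lia.
      have hj' : j < size (be ++ nseq e 0) by rewrite szb; lia.
      have := so_lt so hz hj'; rewrite /lt_at nth_padr // nth_padl // hv.
      by move=> /(_ isT); lia.
    apply: ax; apply: mem_nth; case: so => <-; rewrite szb; lia.
  have hmax : v.+2 <= \max_(y <- be) y.
    rewrite max_geP //; apply/hasP; exists (nth 0 be j); first exact: mem_nth.
    by rewrite hv.
  have [s [t [hst ht hs htv]]] := ib v.+2 isT hmax.
  have IHt := IH t ht htv.
  have claim : forall j', j' < t -> nth 0 be j' = v.+2 -> v.+2 <= nth 0 x j'.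
    move=> j' hj't hj'v.
    have ht' : t < size (be ++ nseq e 0) by rewrite szb; lia.
    have hj'' : j' < size (be ++ nseq e 0) by rewrite szb; lia.
    have := so_lt so ht' hj''; rewrite /lt_at !nth_padl; lia.
  case: (ltnP j t) => hjt; first exact: claim.
  have hjt' : t < j.
    rewrite ltn_neqAle hjt andbT; apply/eqP => E; move: htv; rewrite E hv; lia.
  have hs2 := claim s hst hs.
  have hs' : s < size (be ++ nseq e 0) by rewrite szb; lia.
  have hj'' : j < size (be ++ nseq e 0) by rewrite szb; lia.
  have := so_lt so hs' hj''; rewrite /lt_at !nth_padl; lia.
move=> j; case: (ltnP j (size be)) => hj; last by rewrite nth_padr.
rewrite nth_padl //.
have hp : 0 < nth 0 be j by move/allP: cb; apply; exact: mem_nth.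
by have := key (nth 0 be j).-1 j hj; rewrite prednK //; apply.
Qed.

Definition Fk k (e : seq nat) := flatten [seq nseq (nth 0 e j) (k - j) | j <- iota 0 k].

Lemma F_rcons k e t : size e = k ->
  Fk k.+1 (rcons e t) = map S (Fk k e) ++ nseq t 1.
Proof.
move=> se; rewrite /Fk -addn1 iotaD map_cat flatten_cat /= add0n.
rewrite nth_rcons se ltnn eqxx addn1 subSnn cats0; congr (_ ++ _).
rewrite map_flatten -map_comp; congr flatten; apply/eq_in_map => j.
rewrite mem_iota add0n /= => hj; rewrite map_nseq nth_rcons se hj subSn //.
exact: ltnW.
Qed.

Lemma Fk_pos k e : all (fun x => 0 < x) (Fk k e).
Proof.
apply/allP => x /flattenP [s /mapP [j]]; rewrite mem_iota add0n => /andP [_ hj] ->.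
by move/nseqP => [-> _]; rewrite subn_gt0.
Qed.

Lemma factors_comp a k : factors_with a k -> is_composition a.
Proof.
case=> g [e] [cg _ _ _ ->]; rewrite /is_composition all_cat; apply/andP; split => //.
exact: Fk_pos.
Qed.

Lemma size_Fk k e : size e = k -> size (Fk k e) = sumn e.
Proof.
move=> <-; rewrite /Fk size_flatten /shape -map_comp.
rewrite (eq_map (g := nth 0 e)); last by move=> j /=; rewrite size_nseq.
by rewrite -/(mkseq _ _) mkseq_nth.
Qed.

Lemma sumn_ge_size e : all (fun x => 0 < x) e -> size e <= sumn e.
Proof. elim: e => //= x e IH /andP [hx he]; have := IH he; lia. Qed.

Lemma factors_bound a k : factors_with a k -> k <= size a.
Proof.
case=> g [e] [_ _ se pe ->]; rewrite size_cat size_Fk //.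
have := sumn_ge_size pe; rewrite se; lia.
Qed.

Lemma factor_up be k t : 0 < t -> factors_with be k ->
  factors_with (map S be ++ nseq t 1) k.+1.
Proof.
move=> ht [g [e [cg ag se pe ->]]].
exists (map S g), (rcons e t); split.
- by rewrite /is_composition all_map; apply/allP => x _.
- by rewrite all_map; apply/allP => x hx /=; move/allP: ag => /(_ x hx).
- by rewrite size_rcons se.
- by rewrite all_rcons ht.
- by have := F_rcons t se; rewrite /Fk => ->; rewrite map_cat catA.
Qed.

Lemma peel a k : factors_with a k.+1 ->
  exists be t, [/\ 0 < t, a = map S be ++ nseq t 1 & factors_with be k].
Proof.
case=> g [e [cg ag se pe ->]].
case/lastP: e se pe => [|e0 t] //; rewrite size_rcons => -[se0] pe.
move: pe; rewrite all_rcons => /andP [ht pe0].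
exists (map predn g ++ Fk k e0), t; split => //.
  have := F_rcons t se0; rewrite /Fk => ->.
  rewrite map_cat -map_comp catA; congr ((_ ++ _) ++ _).
  rewrite -[LHS]map_id; apply/eq_in_map => x hx /=.
  by move/allP: ag => /(_ x hx) hx'; rewrite prednK //; apply: leq_trans hx'.
exists (map predn g), e0; split => //.
- apply/allP => y /mapP [x hx ->]; move/allP: ag => /(_ x hx); lia.
- apply/allP => y /mapP [x hx ->]; move/allP: ag => /(_ x hx); lia.
Qed.

Lemma tail1_inj b1 b2 t1 t2 : is_composition b1 -> is_composition b2 ->
  map S b1 ++ nseq t1 1 = map S b2 ++ nseq t2 1 -> b1 = b2 /\ t1 = t2.
Proof.
move=> c1 c2 E.
have cnt : forall b t, is_composition b -> count (pred1 1) (map S b ++ nseq t 1) = t.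
  move=> b t cb; rewrite count_cat count_nseq /= mul1n count_map.
  rewrite (eq_in_count (a2 := pred0)) ?count_pred0 //.
  by move=> x hx /=; move/allP: cb => /(_ x hx); rewrite eqSS; case: eqP => // ->.
have et : t1 = t2 by rewrite -(cnt b1 t1 c1) -(cnt b2 t2 c2) E.
subst t2; split => //.
have sz : size (map S b1) = size (map S b2).
  by have := congr1 size E; rewrite !size_cat; lia.
move/eqP: E; rewrite eqseq_cat // => /andP [/eqP E _].
exact: (inj_map succn_inj E).
Qed.

Definition maxk a k := factors_with a k /\ forall k', factors_with a k' -> k' <= k.

Lemma maxk_uniq a k1 k2 : maxk a k1 -> maxk a k2 -> k1 = k2.
Proof. by case=> h1 m1 [h2 m2]; apply/eqP; rewrite eqn_leq m1 // m2. Qed.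

Lemma factors0 a : is_composition a -> factors_with a 0.
Proof.
move=> ca; exists a, [::]; split => //.
by rewrite /= cats0.
Qed.

Lemma ex_max (P : nat -> Prop) N : P 0 -> (forall k, P k -> k <= N) ->
  exists k, P k /\ forall k', P k' -> k' <= k.
Proof.
elim: N => [|N IH] p0 hb; first by exists 0; split => // k' /hb.
case: (classic (P N.+1)) => h; first by exists N.+1.
apply: IH => // k hk; have := hb k hk; rewrite leq_eqVlt => /orP [/eqP E|] //.
by move: hk; rewrite E.
Qed.

Lemma maxk_ex a : is_composition a -> exists k, maxk a k.
Proof.
move=> ca; have [k [h1 h2]] := ex_max (factors0 ca) (@factors_bound a).
by exists k.
Qed.

Lemma maxk_pair be k t : is_composition be -> 0 < t -> maxk be k ->
  maxk (map S be ++ nseq t 1) k.+1.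
Proof.
move=> cb ht [h1 h2]; split; first exact: factor_up.
case=> // k' /peel [be' [t' [ht' E f']]].
have cb' := factors_comp f'.
have [eb _] := tail1_inj cb' cb (esym E).
by rewrite ltnS h2 // -eb.
Qed.

Lemma pure_maxk a k : maxk a k -> pure a <-> ~~ odd k.
Proof.
move=> mk; split.
  by case=> k' [f1 f2 ev]; have -> : k = k' by apply: (maxk_uniq mk).
by move=> ev; exists k; case: mk => f1 f2.
Qed.

Lemma pair_pure be t : is_composition be -> 0 < t ->
  (pure (map S be ++ nseq t 1) <-> ~ pure be).
Proof.
move=> cb ht; have [k mk] := maxk_ex cb.
rewrite (pure_maxk (maxk_pair cb ht mk)) (pure_maxk mk) /=.
case: (odd k) => /=; split => //; by apply.
Qed.

Lemma same_order_S b : same_order b (map S b).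
Proof.
apply: order_from_mono; first by rewrite size_map.
move=> j k hj hk; rewrite /lt_at !(nth_map 0) //; try lia.
Qed.

Lemma same_order_pred b : all (fun x => 0 < x) b -> same_order b (map predn b).
Proof.
move=> /allP pb; apply: order_from_mono; first by rewrite size_map.
move=> j k hj hk; rewrite /lt_at !(nth_map 0) //.
have := pb _ (mem_nth 0 hj); have := pb _ (mem_nth 0 hk).
move: (nth 0 b j) (nth 0 b k) => x y /= hy hx; case: x hx => // x _; case: y hy => // y _ /=.
Qed.

Lemma eq_pointwise (s1 s2 : seq nat) : size s1 = size s2 ->
  (forall j, nth 0 s1 j <= nth 0 s2 j) -> (forall j, nth 0 s2 j <= nth 0 s1 j) -> s1 = s2.
Proof.
move=> e h1 h2; apply: (eq_from_nth (x0 := 0)) => // j _.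
by apply/eqP; rewrite eqn_leq h1 h2.
Qed.

Definition inB (b : seq nat) := [/\ is_composition b, pure b & inverting b].

Lemma mixed_false b1 b2 e1 : inB b1 -> inB b2 -> 0 < e1 ->
  same_order (b1 ++ nseq e1 0) b2 -> False.
Proof.
move=> [c1 p1 i1] [c2 p2 i2] he so.
set B1 := b1 ++ nseq e1 0.
have sz : size B1 = size b2 by case: so.
have le1 := minimal_le c1 i1 so (or_introl he).
have so2 : same_order (b2 ++ nseq 0 0) (map S B1).
  rewrite cats0; apply: same_order_trans (same_order_S B1).
  exact: same_order_sym.
have ps : all (fun y => 0 < y) (map S B1) by rewrite all_map; apply/allP.
have le2 := minimal_le c2 i2 so2 (or_intror ps).
have so3 : same_order B1 (map predn b2) by apply: same_order_trans so (same_order_pred c2).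
have le3 := minimal_le c1 i1 so3 (or_introl he).
have E : b2 = map S B1.
  apply: (eq_from_nth (x0 := 0)); first by rewrite size_map.
  move=> j hj; have hj' : j < size B1 by rewrite sz.
  have := le1 j; have := le3 j; have := le2 j; rewrite cats0.
  rewrite !(nth_map 0 _ _ hj') !(nth_map 0 _ _ hj) -/B1.
  have : 0 < nth 0 b2 j by move/allP: c2; apply; exact: mem_nth.
  move: (nth 0 b2 j) (nth 0 B1 j) => x y; rewrite -subn1; lia.
have : pure (map S b1 ++ nseq e1 1).
  have <- : map S B1 = map S b1 ++ nseq e1 1 by rewrite map_cat map_nseq.
  by rewrite -E.
by move/(pair_pure c1 he).
Qed.

Lemma strip_eq b1 b2 e1 e2 : is_composition b1 -> is_composition b2 ->
  b1 ++ nseq e1 0 = b2 ++ nseq e2 0 -> b1 = b2.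
Proof.
move=> c1 c2 E.
have key : forall s1 s2 f1 f2, is_composition s2 -> s1 ++ nseq f1 0 = s2 ++ nseq f2 0 ->
    ~ size s1 < size s2.
  move=> s1 s2 f1 f2 cs2 E' hlt.
  have := congr1 (nth 0 ^~ (size s1)) E'; rewrite /= nth_padr // nth_padl //.
  have : 0 < nth 0 s2 (size s1) by move/allP: cs2; apply; exact: mem_nth.
  lia.
have sz : size b1 = size b2.
  case: (ltngtP (size b1) (size b2)) => // h; exfalso.
  - exact: (key _ _ _ _ c2 E).
  - exact: (key _ _ _ _ c1 (esym E)).
by move/eqP: E; rewrite eqseq_cat // => /andP [/eqP].
Qed.

Lemma Bpad_eq b1 b2 e1 e2 : inB b1 -> inB b2 ->
  same_order (b1 ++ nseq e1 0) (b2 ++ nseq e2 0) ->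
  b1 ++ nseq e1 0 = b2 ++ nseq e2 0.
Proof.
move=> h1 h2 so; have [c1 _ i1] := h1; have [c2 _ i2] := h2.
have sz : size (b1 ++ nseq e1 0) = size (b2 ++ nseq e2 0) by case: so.
have so' := same_order_sym so.
case: (posnP e1) => he1; case: (posnP e2) => he2.
- subst; apply: eq_pointwise => //.
  + by apply: (minimal_le c1 i1 so); right; rewrite /= cats0.
  + by apply: (minimal_le c2 i2 so'); right; rewrite /= cats0.
- subst; rewrite /= cats0 in so'; case: (mixed_false h2 h1 he2 so').
- subst; rewrite /= cats0 in so; case: (mixed_false h1 h2 he1 so).
- apply: eq_pointwise => //.
  + exact: (minimal_le c1 i1 so (or_introl he1)).
  + exact: (minimal_le c2 i2 so' (or_introl he2)).
Qed.

Lemma map_nth_iota (c : seq nat) : [seq nth 0 c i | i <- iota 0 (size c)] = c.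
Proof. by rewrite -{3}(mkseq_nth 0 c). Qed.

Lemma phi_C n d p : in_PB n d p -> in_C n d (phi p).
Proof.
case: p => l be [pl [cb _ _ _] hs sl sb] /=.
have [cl _] := andP pl.
split.
- apply/(all_nthP 0) => j; rewrite size_phi => hj; rewrite nth_phi //=.
  case: (ltnP j (size be)) => hjb.
    rewrite /pad_beta nth_padl //.
    have : 0 < nth 0 be j by move/allP: cb; apply; exact: mem_nth.
    lia.
  rewrite /pad_beta nth_padr // add0n.
  have hr := rank_bound hj; move: hr; rewrite size_pad => hr.
  have hsz : maxn (size l) (size be) = size l.
    by move: hj; rewrite size_pad /=; lia.
  rewrite hsz in hr.
  by move/allP: cl; apply; exact: mem_nth.
- by rewrite sum_phi.
- rewrite size_phi size_pad; lia.
Qed.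

Lemma part_eq (l1 l2 : seq nat) m : is_composition l1 -> is_composition l2 ->
  size l1 <= m -> size l2 <= m -> (forall r, r < m -> nth 0 l1 r = nth 0 l2 r) -> l1 = l2.
Proof.
move=> c1 c2 s1 s2 H.
have key : forall a b : seq nat, is_composition b -> size b <= m ->
   (forall r, r < m -> nth 0 a r = nth 0 b r) -> ~ size a < size b.
  move=> a b cb' sb' H' hlt.
  have := H' (size a) (leq_trans hlt sb'); rewrite nth_default //.
  have : 0 < nth 0 b (size a) by move/allP: cb'; apply; exact: mem_nth.
  lia.
have sz : size l1 = size l2.
  case: (ltngtP (size l1) (size l2)) => // h; exfalso.
  - exact: (key _ _ c2 s2 H h).
  - by apply: (key _ _ c1 s1 _ h) => r hr; rewrite H.
apply: (eq_from_nth (x0 := 0)) => // r hr; apply: H; exact: leq_trans hr s1.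
Qed.

Lemma phi_inj n d p q : in_PB n d p -> in_PB n d q -> phi p = phi q -> p = q.
Proof.
case: p => l1 b1 [pl1 [cb1 pb1 ib1 _] _ sl1 _].
case: q => l2 b2 [pl2 [cb2 pb2 ib2 _] _ sl2 _] /= E.
have [cl1 so1] := andP pl1; have [cl2 so2] := andP pl2.
have O1 := phi_order (p := (l1, b1)) so1; have O2 := phi_order (p := (l2, b2)) so2.
rewrite /= E in O1.
have so : same_order (pad_beta l1 b1) (pad_beta l2 b2).
  exact: same_order_trans O1 (same_order_sym O2).
have eb := Bpad_eq (And3 cb1 pb1 ib1) (And3 cb2 pb2 ib2) so.
have eb' : b1 = b2 := strip_eq cb1 cb2 eb.
subst b2; rewrite -/(pad_beta l1 b1) -/(pad_beta l2 b1) in eb.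
set b := pad_beta l1 b1.
have szb : size (pad_beta l2 b1) = size b by rewrite -eb.
have hm1 : size l1 <= size b by rewrite /b size_pad; exact: leq_maxl.
have hm2 : size l2 <= size b by rewrite -szb size_pad; exact: leq_maxl.
suff -> : l1 = l2 by [].
apply: (part_eq cl1 cl2 hm1 hm2) => r hr.
have [j hj hrj] := rank_surj hr.
have hj2 : j < size (pad_beta l2 b1) by rewrite szb.
have := congr1 (nth 0 ^~ j) E; rewrite /= !nth_phi //= -eb -/b hrj.
lia.
Qed.

Definition decv v (c : seq nat) := [seq x - (v <= x) | x <- c].

Lemma dec_order c v : 0 < v ->
  (forall j k, j < size c -> k < size c -> nth 0 c k = v.-1 -> nth 0 c j = v -> k < j) ->
  same_order c (decv v c).
Proof.
move=> hv C; apply: order_from_mono; first by rewrite size_map.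
move=> j k hj hk; rewrite /lt_at !(nth_map 0) //.
have := C k j hk hj; rewrite -subn1.
move: (nth 0 c j) (nth 0 c k) => x y.
by case: (leqP v x) => hx; case: (leqP v y) => hy /=; lia.
Qed.

Lemma top_rank c v j : j < size c ->
  (rank_in c j < count (fun x => v <= x) c) = (v <= nth 0 c j).
Proof.
move=> hj.
have E : count (fun x => v <= x) c = count (fun l => v <= nth 0 c l) (iota 0 (size c)).
  by rewrite -[in LHS](map_nth_iota c) count_map.
rewrite E rank_inE; case h: (v <= nth 0 c j).
- apply: (@count_lt_strict _ _ _ _ j) => //.
  + by move=> l; rewrite /lt_at /=; lia.
  + by rewrite mem_iota.
  + by rewrite lt_at_irr.
- apply/negbTE; rewrite -leqNgt; apply: sub_count => l /=; rewrite /lt_at; lia.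
Qed.

Lemma sumn_decv v c : 0 < v -> sumn (decv v c) + count (fun x => v <= x) c = sumn c.
Proof.
move=> hv; elim: c => //= x c IH; rewrite -IH.
by case: (leqP v x) => hx /=; lia.
Qed.

Lemma inv_down be t : inverting (map S be ++ nseq t 1) -> inverting be.
Proof.
move=> ic i hi hmax.
set c := map S be ++ nseq t 1.
have hmax' : i.+1 <= \max_(x <- c) x.
  move: hmax; rewrite !max_geP //; last by lia.
  case/hasP => x hx hix; apply/hasP; exists x.+1 => //.
  by rewrite mem_cat map_f.
have h1 : 1 < i.+1 by lia.
have [s [u [hsu hu hs hut]]] := ic i.+1 h1 hmax'.
have small : forall j, size be <= j -> nth 0 c j <= 1.
  move=> j hj; rewrite nth_cat ltnNge size_map hj /= nth_nseq; case: ifP => //.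
have hu' : u < size be.
  rewrite ltnNge; apply/negP => H; have := small u H; rewrite hut; lia.
have hs' : s < size be by lia.
move: hs hut; rewrite /c !nth_cat size_map hs' hu' !(nth_map 0) // => [[hs] hut].
exists s, u; split => //; lia.
Qed.

Lemma path_nseq1 m : path geq 1 (nseq m 1).
Proof. by elim: m => //= m ->; rewrite leqnn. Qed.

Lemma phi_nil c : phi ([::], c) = c.
Proof.
apply: (eq_from_nth (x0 := 0)); rewrite size_phi /pad_beta /= ?sub0n ?cats0 //.
move=> j hj; rewrite nth_phi /pad_beta /= ?sub0n ?cats0 ?nth_nil ?addn0 //.
Qed.

Lemma pure_nil_ok c : is_composition c -> inverting c -> pure c -> size c <= 0 -> True.
Proof. by []. Qed.

Lemma surj_step n c : is_composition c -> size c <= n ->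
  (forall c', is_composition c' -> size c' <= n -> sumn c' < sumn c ->
     exists2 p, in_PB n (sumn c') p & phi p = c') ->
  exists2 p, in_PB n (sumn c) p & phi p = c.
Proof.
move=> cc sc IH.
case: (classic (inverting c)) => ic.
  case: (classic (pure c)) => pc.
    exists ([::], c); last exact: phi_nil.
    by split => //=.
  have [k mk] := maxk_ex cc.
  have ok : odd k.
    by case: (boolP (odd k)) => // ev; exfalso; apply: pc; rewrite (pure_maxk mk).
  case: k ok mk => // k' _ mk.
  have [be [t [ht Ec fb]]] := peel (proj1 mk).
  have cb := factors_comp fb.
  have pb : pure be.
    apply: NNPP => npb; apply: pc; rewrite Ec.
    by apply/(pair_pure cb ht).
  have ib : inverting be by apply: (@inv_down be t); rewrite -Ec.
  have szc : size c = size be + t by rewrite Ec size_cat size_map size_nseq.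
  have Ephi : phi (nseq (size c) 1, be) = c.
    have pad : pad_beta (nseq (size c) 1) be = be ++ nseq t 0.
      by rewrite /pad_beta size_nseq szc; congr (_ ++ nseq _ _); lia.
    apply: (eq_from_nth (x0 := 0)).
      by rewrite size_phi /= pad size_cat size_nseq szc.
    move=> j; rewrite size_phi /= => hj; rewrite nth_phi //= nth_nseq.
    have hr := rank_bound hj; move: hj hr; rewrite pad size_cat size_nseq -szc => hj hr.
    rewrite hr [in RHS]Ec !nth_cat size_map; case: ifP => hjb.
      by rewrite (nth_map 0) // addn1.
    by rewrite !nth_nseq; move: hj; rewrite szc => hj; case: ifP => //; lia.
  exists (nseq (size c) 1, be) => //.
  split => //=.
  - apply/andP; split; first by apply/allP => x /nseqP [->].
    by case: (size c) => //= m; exact: path_nseq1.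
  - split => //; rewrite szc in sc; lia.
  - by have := sum_phi (nseq (size c) 1, be); rewrite Ephi /= => ->.
  - by rewrite size_nseq.
  - rewrite szc in sc; lia.
have [i hi] : exists i, ~ (1 < i -> i <= \max_(x <- c) x ->
    exists s t, [/\ s < t, t < size c, nth 0 c s = i & nth 0 c t = i.-1]).
  by apply: not_all_ex_not.
have hi1 : 1 < i by apply: NNPP => H; apply: hi => a; case: (H a).
have himax : i <= \max_(x <- c) x.
  by apply: NNPP => H; apply: hi => _ a; case: (H a).
have hno : ~ exists s t, [/\ s < t, t < size c, nth 0 c s = i & nth 0 c t = i.-1].
  by move=> E; apply: hi => _ _.
have C : forall j k, j < size c -> k < size c -> nth 0 c k = i.-1 -> nth 0 c j = i -> k < j.
  move=> j k hj hk hk1 hj1; rewrite ltnNge; apply/negP => hjk.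
  apply: hno; exists j, k; split => //.
  rewrite ltn_neqAle hjk andbT; apply/eqP => E; move: hk1; rewrite -E hj1; lia.
have hv : 0 < i by lia.
set c' := decv i c.
have so : same_order c c' := dec_order hv C.
set m' := count (fun x => i <= x) c.
have hm' : 0 < m' by rewrite /m' -has_count -max_geP.
have cc' : is_composition c'.
  apply/allP => y /mapP [x hx ->]; move/allP: cc => /(_ x hx).
  by case: (leqP i x) => /=; lia.
have sc' : size c' <= n by rewrite size_map.
have ssum : sumn c' + m' = sumn c := sumn_decv c hv.
have lt' : sumn c' < sumn c by lia.
have [[l' be'] [pl' [cb' pb' ib' _] hsum' sl' sb'] Ep'] := IH c' cc' sc' lt'.
rewrite /= in pl' cb' pb' ib' sl' sb' hsum'.
have [cl' sol'] := andP pl'.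
set M := maxn (size l') m'.
set l2 := [seq nth 0 l' r + (r < m') | r <- iota 0 M].
have nl2 : forall r, r < size c -> nth 0 l2 r = nth 0 l' r + (r < m').
  move=> r hr; case: (ltnP r M) => hrM.
    by rewrite /l2 (nth_map 0) ?size_iota // nth_iota.
  rewrite nth_default ?size_map ?size_iota // nth_default //; last by move: hrM; rewrite /M; lia.
  by move: hrM; rewrite /M; case: ltnP => //; lia.
have szc' : size c' = size c by rewrite size_map.
have szp' : size c = maxn (size l') (size be').
  by rewrite -szc' -Ep' size_phi size_pad.
have hmc : m' <= size c by apply: count_size.
have szl2 : size l2 = M by rewrite size_map size_iota.
have padE : pad_beta l2 be' = pad_beta l' be'.
  rewrite /pad_beta szl2; congr (_ ++ nseq _ _); rewrite /M; lia.
have Ephi : phi (l2, be') = c.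
  have sz1 : size (pad_beta l2 be') = size c by rewrite padE size_pad szp'.
  apply: (eq_from_nth (x0 := 0)); first by rewrite size_phi.
  move=> j; rewrite size_phi /= => hj; rewrite nth_phi //= padE.
  have hjc : j < size c by rewrite -sz1.
  have hj' : j < size (pad_beta l' be') by rewrite -padE.
  have O' := phi_order (p := (l', be')) sol'; rewrite /= Ep' in O'.
  have hr : rank_in (pad_beta l' be') j < size c by rewrite -sz1 padE; exact: rank_bound.
  rewrite nl2 // addnA.
  have := nth_phi (p := (l', be')) hj'; rewrite /= Ep' => <-.
  rewrite (same_order_rank hj' O') -(same_order_rank hjc so).
  rewrite top_rank // /c' (nth_map 0) //.
  by case: (leqP i (nth 0 c j)) => /=; lia.
exists (l2, be') => //; split => //=.
- apply/andP; split.
    apply/allP => x /mapP [r]; rewrite mem_iota add0n /M => /andP [_ hr] ->.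
    case: (ltnP r (size l')) => h.
      have : 0 < nth 0 l' r by move/allP: cl'; apply; exact: mem_nth.
      lia.
    have : r < m' by lia.
    by move=> ->; rewrite addn1.
  rewrite sorted_map; apply: (sub_sorted _ (iota_sorted 0 M)) => x y hxy /=.
  have := nth_noninc sol' hxy; lia.
- by have := sum_phi (l2, be'); rewrite Ephi /= => ->.
- rewrite szl2 /M; lia.
Qed.

Theorem proposition3p2 (n d : nat) : 1 <= n ->
  [/\ (forall p, in_PB n d p -> in_C n d (phi p)),
      (forall p q, in_PB n d p -> in_PB n d q -> phi p = phi q -> p = q) &
      (forall c, in_C n d c -> exists2 p, in_PB n d p & phi p = c)].
Proof.
move=> _; split.
- exact: phi_C.
- exact: phi_inj.
- move=> c [cc <- sc].
  have : sumn c <= sumn c by [].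
  move: {2}(sumn c) => N; elim: N c cc sc => [|N IHN] c cc sc hN.
    apply: surj_step => // c' _ _; lia.
  apply: surj_step => // c' cc' sc' hlt; apply: IHN => //; lia.
Qed.
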